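(* Let $f$ be an L-additive arithmetic function whose associated completely multiplicative function $h_f$ is nonzero-valued, and let $\Lambda_f$ be the generalized von Mangoldt function associated to $f$. Then for every integer $n\geq 1$, $$f(n)=h_f(n)\sum_{d\mid n}\Lambda_f(d),$$ i.e. in terms of Dirichlet convolution, $f=h_f\ast (h_f\Lambda_f)$.
   Context: An arithmetic function is a function $\mathbb{N}\to\mathbb{C}$. An arithmetic function $f$ is L-additive (Leibniz-additive) if there is a completely multiplicative function $h_f$ (so $h_f(1)=1$ and $h_f(mn)=h_f(m)h_f(n)$ for all $m,n$) such that $f(mn)=f(m)h_f(n)+f(n)h_f(m)$ for all positive integers $m,n$; such an $h_f$ is fixed. The generalized von Mangoldt function is defined by $\Lambda_f(n)=\frac{f(p)}{h_f(p)}$ if $n=p^k$ for some prime $p$ and integer $k\geq 1$, and $\Lambda_f(n)=0$ otherwise. The Dirichlet convolution is $(F\ast G)(n)=\sum_{d\mid n}F(d)G(n/d)$, and $h_f\Lambda_f$ denotes the pointwise product. *)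

(* Defs.v *)
From mathcomp Require Import all_boot all_order all_algebra.
Set Implicit Arguments. Unset Strict Implicit. Unset Printing Implicit Defensive.
Import GRing.Theory Num.Theory.
Local Open Scope ring_scope.

(* Arithmetic functions N -> C are modelled as nat -> C; the value at 0 is
   irrelevant and all conditions are imposed on positive arguments only.
   C is an arbitrary numClosedFieldType (MathComp's abstraction of the
   complex numbers; e.g. complex R for a real closed field R). *)

Definition completely_multiplicative (C : numClosedFieldType) (h : nat -> C) : Prop :=
  h 1%N = 1 /\ forall m n : nat, (0 < m)%N -> (0 < n)%N -> h (m * n)%N = h m * h n.

Definition L_additive (C : numClosedFieldType) (f h : nat -> C) : Prop :=
  completely_multiplicative h /\
  forall m n : nat, (0 < m)%N -> (0 < n)%N ->
    f (m * n)%N = f m * h n + f n * h m.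

Definition prime_power (n : nat) : bool :=
  [exists p : 'I_n.+1, [exists k : 'I_n.+1,
     prime p && (0 < k)%N && (n == p ^ k)%N]].

Definition vonMangoldt (C : numClosedFieldType) (f h : nat -> C) (n : nat) : C :=
  if prime_power n then f (pdiv n) / h (pdiv n) else 0.

Definition dconv (C : numClosedFieldType) (F G : nat -> C) (n : nat) : C :=
  \sum_(d <- divisors n) F d * G (n %/ d)%N.

(* Main.v *)
Require Import Defs.
From mathcomp Require Import all_boot all_order all_algebra.
From mathcomp Require Import ring.
Import GRing.Theory Num.Theory.
Local Open Scope ring_scope.

Lemma ppP (d : nat) :
  reflect (exists p k, [/\ prime p, (0 < k)%N & d = (p ^ k)%N]) (prime_power d).
Proof.
apply: (iffP idP).
  case/existsP=> p /existsP [k /andP [/andP [pp kp] /eqP ->]].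
  by exists (val p), (val k).
case=> p [k [pp kp ->]]; apply/existsP.
have p1 : (1 < p)%N by apply: prime_gt1.
have lep : (p < (p ^ k).+1)%N.
  by rewrite ltnS -{1}(expn1 p) leq_pexp2l // ltnW.
have lek : (k < (p ^ k).+1)%N by apply: ltnW; rewrite ltnS ltn_expl.
exists (Ordinal lep); apply/existsP; exists (Ordinal lek) => /=.
by rewrite pp kp eqxx.
Qed.

Lemma sum_div (C : numClosedFieldType) (F : nat -> C) n N : (0 < n)%N -> (n < N)%N ->
  \sum_(d <- divisors n) F d = \sum_(d < N | (d %| n)%N) F d.
Proof.
move=> n0 nN.
rewrite -(big_mkord (fun d => (d %| n)%N)) -big_filter.
apply: perm_big; apply: uniq_perm.
- exact: divisors_uniq.
- by apply: filter_uniq; apply: iota_uniq.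
move=> d; rewrite mem_filter mem_iota add0n -dvdn_divisors //.
case dn: (d %| n)%N => //=.
by rewrite subn0 (leq_ltn_trans (dvdn_leq n0 dn) nN).
Qed.

Lemma divKK n d : (0 < n)%N -> (d %| n)%N -> (n %/ (n %/ d))%N = d.
Proof. by move=> n0 dn; rewrite divnA // mulKn. Qed.

Theorem theorem2p1 (C : numClosedFieldType) (f h : nat -> C)
  (hLadd : L_additive f h)
  (hnz : forall n : nat, (0 < n)%N -> h n != 0) :
  forall n : nat, (0 < n)%N ->
    f n = h n * \sum_(d <- divisors n) vonMangoldt f h d /\
    f n = dconv h (fun d => h d * vonMangoldt f h d) n.
Proof.
case: hLadd => [[h1 hM] fM].
set L := vonMangoldt f h.
have key : forall n, (0 < n)%N -> f n / h n = \sum_(d < n.+1 | (d %| n)%N) L d.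
  elim/ltn_ind => n IH n0.
  case: (ltngtP n 1) => [|n1|->].
  - by rewrite ltnNge n0.
  - set p := pdiv n.
    have pp : prime p by apply: pdiv_prime.
    have p0 : (0 < p)%N by apply: prime_gt0.
    set m := (n %/ p)%N.
    have nE : n = (p * m)%N by rewrite /m mulnC divnK // pdiv_dvd.
    have m0 : (0 < m)%N by move: n0; rewrite nE muln_gt0 => /andP [].
    have mdn : (m %| n)%N by rewrite nE dvdn_mull.
    have mn : (m < n)%N by rewrite /m ltn_Pdiv // prime_gt1.
    have gE : f n / h n = f p / h p + f m / h m.
      rewrite nE fM // hM // mulrDl.
      have hp := hnz p p0; have hm := hnz m m0.
      by field; rewrite hp hm.
    rewrite gE [f m / _]IH //  (bigID (fun d : 'I_n.+1 => (d %| m)%N)) /=.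
    have -> : \sum_(i < n.+1 | ((i %| n) && (i %| m))%N) L i = \sum_(i < m.+1 | (i %| m)%N) L i.
      rewrite (big_ord_widen_cond n.+1 (fun i => (i %| m)%N) L); last by rewrite ltnS ltnW.
      apply: eq_bigl => i; case im: (i %| m)%N; rewrite ?andbF ?andbT //=.
      by rewrite (dvdn_trans im mdn) ltnS dvdn_leq.
    rewrite addrC; congr (_ + _).
    set l := logn p m.
    have d0lt : ((p ^ l.+1) < n.+1)%N.
      rewrite ltnS dvdn_leq // nE expnS dvdn_pmul2l //.
      exact: pfactor_dvdnn.
    rewrite (bigD1 (Ordinal d0lt)) /=; last first.
      rewrite nE expnS dvdn_pmul2l // pfactor_dvdnn /=.
      by rewrite -expnS pfactor_dvdn // ltnn.
    rewrite big1 ?addr0.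
      rewrite /L /vonMangoldt pdiv_pfactor //.
      by case: ppP => // [[]]; exists p, l.+1.
    move=> i /andP [/andP [idn idm] ine].
    have ine' : nat_of_ord i <> (p ^ l.+1)%N.
      by move=> e; move/eqP: ine; apply; apply: val_inj.
    clear ine; move: idn idm ine'.
    rewrite /L /vonMangoldt; case: ppP => // [[q [k [qp k0 ->]]]].
    rewrite nE.
    have [-> | qne] := eqVneq q p.
      rewrite pfactor_dvdn // ?muln_gt0 ?p0 // pfactor_dvdn // lognM //.
      rewrite logn_prime // eqxx add1n => kl kl2 ine.
      by exfalso; apply: ine; have -> : k = l.+1 by apply/eqP; rewrite eqn_leq kl ltnNge kl2.
    rewrite Gauss_dvdr; first by move=> ->.
    by rewrite coprime_pexpl // prime_coprime // dvdn_prime2.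
  - have f1 : f 1%N = 0.
      have := fM 1%N 1%N isT isT; rewrite h1 mulr1 => e.
      by move: e; rewrite -{1}(add0r (f 1%N)) => /addIr <-.
    rewrite f1 mul0r big_mkcond big_ord_recl big_ord1 /=.
    rewrite /L /vonMangoldt; case: ppP => [[p [k [pp k0 e]]]|]; last by rewrite add0r.
    exfalso; have p1 := prime_gt1 pp.
    have : (p <= p ^ k)%N by rewrite -{1}(expn1 p) leq_pexp2l // ltnW.
    by rewrite -e /= leqNgt p1.
move=> n n0; have ek := key n n0.
rewrite -(@sum_div _ L n n.+1 n0 (ltnSn n)) in ek.
have fE : f n = h n * \sum_(d <- divisors n) L d.
  by rewrite -ek mulrC divfK // hnz.
split => //; rewrite /dconv.
rewrite (eq_big_seq (fun d => h n * L (n %/ d)%N)); last first.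
  move=> d; rewrite -dvdn_divisors // => dn.
  have d0 : (0 < d)%N by apply: dvdn_gt0 dn.
  have nd0 : (0 < n %/ d)%N by rewrite divn_gt0 // dvdn_leq.
  by rewrite /= mulrA -hM // mulnC divnK.
rewrite fE -big_distrr /=; congr (_ * _).
rewrite -(big_map (fun d => (n %/ d)%N) xpredT L).
apply: perm_big; apply: uniq_perm.
- exact: divisors_uniq.
- rewrite map_inj_in_uniq ?divisors_uniq //.
  move=> a b; rewrite -!dvdn_divisors // => an bn e.
  by rewrite -(@divKK n a n0 an) e divKK.
move=> d; apply/idP/mapP.
  rewrite -dvdn_divisors // => dn; exists (n %/ d)%N.
    by rewrite -dvdn_divisors // dvdn_div.
  by rewrite divKK.
by case=> e; rewrite -dvdn_divisors // => en ->; rewrite -dvdn_divisors // dvdn_div.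
Qed.
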